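(* There is a deterministic distributed algorithm in the CONGEST model which, given an $n$-vertex graph $G=(V,E,w)$ with positive edge weights and a parameter $\epsilon\in(0,1)$, computes a weighted $\epsilon$-defective coloring of $G$ using $O(\epsilon^{-2})$ colors, in $O(\log^* n)$ communication rounds.
   Context: CONGEST model: the network is the graph $G$, vertices have unique identifiers from $\{1,\dots,n\}$ and are processors, and in each synchronous round every vertex sends a message of $O(\log n)$ bits to each neighbour; complexity is the number of rounds. For a coloring $\varphi:V\to[c]$ of a positively edge-weighted graph, let $E_m(v)$ be the set of monochromatic edges at $v$ (edges $(u,v)$ with $\varphi(u)=\varphi(v)$), $defect_w(v)=\sum_{e\in E_m(v)}w(e)$ and $w(v)=\sum_{e\ni v}w(e)$. The coloring is a weighted $\epsilon$-defective coloring if $defect_w(v)\le \epsilon\, w(v)$ for every $v\in V$. *)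

(* Defs.v *)
From HB Require Import structures.
From mathcomp Require Import all_boot all_order all_algebra.
Set Implicit Arguments. Unset Strict Implicit. Unset Printing Implicit Defensive.
Import Order.TTheory GRing.Theory Num.Theory.
Local Open Scope ring_scope.

Fixpoint logstar_aux (fuel n : nat) : nat :=
  match fuel with
  | 0 => 0
  | f.+1 => if (n <= 1)%N then 0 else (logstar_aux f (trunc_log 2 n)).+1
  end.
Definition logstar (n : nat) : nat := logstar_aux n n.

Definition simple_graph (n : nat) (e : rel 'I_n) : Prop :=
  (forall u v, e u v = e v u) /\ (forall v, ~~ e v v).

Definition pos_weights (R : realFieldType) (n : nat) (e : rel 'I_n)
  (w : 'I_n -> 'I_n -> R) : Prop :=
  (forall u v, w u v = w v u) /\ (forall u v, e u v -> 0 < w u v).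

Definition defect_w (R : realFieldType) (n : nat) (e : rel 'I_n)
  (w : 'I_n -> 'I_n -> R) (col : 'I_n -> nat) (v : 'I_n) : R :=
  \sum_(u : 'I_n | e v u && (col u == col v)) w v u.

Definition wdeg (R : realFieldType) (n : nat) (e : rel 'I_n)
  (w : 'I_n -> 'I_n -> R) (v : 'I_n) : R :=
  \sum_(u : 'I_n | e v u) w v u.

Definition weighted_defective_coloring (R : realFieldType) (n : nat)
  (e : rel 'I_n) (w : 'I_n -> 'I_n -> R) (eps : R) (col : 'I_n -> nat) : Prop :=
  forall v, defect_w e w col v <= eps * wdeg e w v.

(* ---------- Deterministic synchronous message passing (CONGEST) ----------
   A uniform deterministic algorithm: each node has a local state of an
   arbitrary type St (unbounded local computation).  Initially a node knows n,
   eps, its own identifier in {1..n}, and the list of (identifier, weight) of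
   its incident edges.  In each round every node sends to each neighbour
   (addressed by identifier) a bit string, then updates its state from the
   list of (sender identifier, message) it received. *)
Record algorithm (R : realFieldType) := Algorithm {
  St : Type;
  init : nat -> R -> nat -> seq (nat * R) -> St;
  send : St -> nat -> bitseq;
  recv : St -> seq (nat * bitseq) -> St;
  output : St -> nat
}.

Section Run.
Variables (R : realFieldType) (A : algorithm R) (n : nat) (e : rel 'I_n)
  (w : 'I_n -> 'I_n -> R) (eps : R).

Definition ident (v : 'I_n) : nat := (val v).+1.

Definition local_input (v : 'I_n) : seq (nat * R) :=
  [seq (ident u, w v u) | u <- enum 'I_n & e v u].

Fixpoint state (t : nat) (v : 'I_n) : St A :=
  match t with
  | 0 => init A n eps (ident v) (local_input v)
  | t'.+1 => recv (state t' v)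
       [seq (ident u, send (state t' u) (ident v)) | u <- enum 'I_n & e v u]
  end.

Definition bandwidth_ok (T B : nat) : Prop :=
  forall t u v, (t < T)%N -> e u v -> (size (send (state t u) (ident v)) <= B)%N.

Definition run_output (T : nat) (v : 'I_n) : nat := output (state T v).
End Run.

(* Main.v *)
Require Import Defs.
From HB Require Import structures.
From mathcomp Require Import all_boot all_order all_algebra.
From mathcomp Require Import finfield.
From mathcomp Require Import zify ring lra.
Import Order.TTheory GRing.Theory Num.Theory.
Unset Printing Implicit Defensive.

(* Proof: an explicit deterministic algorithm performing
   O(log* n) rounds of defective color reduction (Kuhn style) using
   Reed-Solomon codes over GF(2^a), followed by one final reduction. *)


Fixpoint enc (f c : nat) : bitseq :=
  if f is f'.+1 then odd c :: enc f' c./2 else [::].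
Fixpoint dec (s : bitseq) : nat :=
  if s is b :: s' then (b + (dec s').*2)%N else 0%N.

Lemma size_enc f c : size (enc f c) = f.
Proof. by elim: f c => //= f IH c; rewrite IH. Qed.

Lemma dec_enc f c : c < 2 ^ f -> dec (enc f c) = c.
Proof.
elim: f c => [|f IH] c /=; first by rewrite expn0 ltnS leqn0 => /eqP ->.
move=> hc; rewrite IH ?odd_double_half //.
by rewrite ltn_half_double -muln2 -expnSr.
Qed.

Definition tl := trunc_log 2.
Definition b0 n := (tl n).+1.
Definition s1 l b := (l + 3 + 2 * tl b)%N.
Fixpoint sched l f b : seq (nat * nat * nat) :=
  if f is f'.+1 then
    (if 8 * l + 128 < b then (s1 l b, b.-1, b) :: sched l f' (2 * (s1 l b).+1)
     else [:: (l + 15, 7, b)])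
  else [::].

Lemma tl_le b : 0 < b -> 2 ^ tl b <= b.
Proof. by move=> hb; apply: trunc_logP. Qed.
Lemma tl_lt b : b < 2 ^ (tl b).+1.
Proof. by apply: trunc_log_ltn. Qed.

Lemma lin_exp t : 16 * t <= 2 ^ t + 96.
Proof.
elim: t => // t IH.
case: (ltnP t 4) => ht.
  by case: t ht IH => [|[|[|[|]]]].
have : 16 <= 2 ^ t by rewrite (leq_trans _ (leq_pexp2l _ ht)).
rewrite expnS; lia.
Qed.

Lemma phase_half l b : 8 * l + 128 < b -> 2 * (2 * (s1 l b).+1) <= b.
Proof.
move=> hb; have h1 := lin_exp (tl b); have h2 := tl_le b (leq_ltn_trans (leq0n _) hb).
rewrite /s1; lia.
Qed.

Lemma phase_tl l b : 8 * l + 128 < b -> (tl (2 * (s1 l b).+1)).+1 <= tl b.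
Proof.
move=> hb; have h := phase_half _ _ hb.
rewrite /tl -trunc_log2_double ?muln_gt0 //; apply: leq_trunc_log.
by rewrite -muln2 mulnC.
Qed.

Lemma sched_bits l f b : all (fun p : nat * nat * nat => p.2 <= b) (sched l f b).
Proof.
elim: f b => //= f IH b; case: ifP => hb /=; rewrite ?leqnn //.
apply: sub_all (IH _) => p /= hp; apply: (leq_trans hp).
have := phase_half _ _ hb; lia.
Qed.

Lemma sched_small l j f b : b <= 128 * 2 ^ j -> size (sched l f b) <= j.+1.
Proof.
elim: j f b => [|j IH] f b hb; case: f => //= f; case: ifP => hl //=.
  by move: hb hl; rewrite expn0; lia.
rewrite ltnS; apply: IH; have := phase_half _ _ hl; move: hb; rewrite expnS; lia.
Qed.

Section Count.
Variable n : nat.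
Definition u j := iter j tl n.

Lemma logstar_aux_ok f m : m <= f -> iter (logstar_aux f m) tl m <= 1.
Proof.
elim: f m => [|f IH] m /=; first by rewrite leqn0 => /eqP ->.
case: ifP => //= hm hf.
change (iter (logstar_aux f (tl m)).+1 tl m <= 1); rewrite iterSr; apply: IH.
have hm0 : 0 < m by lia.
have := tl_le m hm0; have := ltn_expl (tl m) (isT : 1 < 2); lia.
Qed.

Lemma tl_le1 x : x <= 1 -> tl x <= 1.
Proof. by case: x => [|[]] //; rewrite /tl ?trunc_log0 ?trunc_log1. Qed.

Lemma iter_le1 k x : x <= 1 -> iter k tl x <= 1.
Proof. by elim: k => //= k IH hx; apply: tl_le1; apply: IH. Qed.

Lemma u_big j : 1 < u j -> j < logstar n.
Proof.
move=> h; rewrite ltnNge; apply/negP => hj.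
have h1 := logstar_aux_ok n n (leqnn n).
move: h; rewrite /u -(subnK hj) iterD.
by rewrite ltnNge iter_le1.
Qed.

Lemma tl_mono_lt x y : 0 < x -> x < y * 2 ^ 4 -> tl x < tl y + 5.
Proof.
move=> hx hxy.
have h1 := tl_le x hx; have h2 := tl_lt y.
have : 2 ^ tl x < 2 ^ (tl y + 5).
  move: h2; rewrite expnD expnS; move: hxy; rewrite (expnS 2 4).
  rewrite (expnS 2 3) (expnS 2 2) (expnS 2 1) expn1 => hxy h2. lia.
by rewrite ltn_exp2l.
Qed.

Lemma sched_size l f b k :
  (b <= 8 * u k.+1 + 48 \/ b <= 8 * l + 128) ->
  size (sched l f b) <= logstar n - k + 4.
Proof.
elim: f b k => [|f IH] b k hP //.
case: (ltnP (8 * l + 128) b) => hl; last first.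
  by rewrite /= ltnNge hl /=; lia.
have hb : b <= 8 * u k.+1 + 48 by lia.
case: (ltnP (u k.+1) 48) => hu.
  have := sched_small l 2 f.+1 b; rewrite (_ : 128 * 2 ^ 2 = 512) // => h.
  have hb5 : b <= 512 by lia.
  have := h hb5; lia.
rewrite /= hl /=.
have hk := u_big k.+1 (leq_trans (isT : 1 < 48) hu).
have htl : tl b < tl (u k.+1) + 5.
  by apply: tl_mono_lt; lia.
have hu2 : u k.+2 = tl (u k.+1) by [].
have := IH (2 * (s1 l b).+1) k.+1.
rewrite /s1; lia.
Qed.
End Count.

Local Open Scope ring_scope.

Definition Fld (s : nat) : finFieldType :=
  sval (@pPrimePowerField 2 s.+1 (isT : prime 2) (ltn0Sn s)).
Lemma card_Fld s : #|Fld s| = (2 ^ s.+1)%N.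
Proof. by rewrite /Fld; case: pPrimePowerField. Qed.

Definition digitF s (c j : nat) : Fld s :=
  nth 0 (enum (Fld s)) ((c %/ (2 ^ s.+1) ^ j) %% 2 ^ s.+1)%N.
Definition polyc s d c : {poly Fld s} := \poly_(j < d.+1) digitF s c j.
Definition Hc s d c (x : Fld s) : nat := enum_rank (polyc s d c).[x].
Arguments digitF : clear implicits.
Arguments polyc : clear implicits.
Arguments Hc : clear implicits.

Lemma Hc_lt s d c x : (Hc s d c x < 2 ^ s.+1)%N.
Proof. by rewrite /Hc -card_Fld ltn_ord. Qed.

Lemma digits_inj q d c c' : (0 < q)%N -> (c < q ^ d.+1)%N -> (c' < q ^ d.+1)%N ->
  (forall j, (j <= d)%N -> (c %/ q ^ j) %% q = (c' %/ q ^ j) %% q)%N -> c = c'.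
Proof.
move=> q0; elim: d c c' => [|d IH] c c' hc hc' hj.
  by have := hj 0%N (leqnn _); rewrite expn0 !divn1 !modn_small // -(expn1 q).
rewrite (divn_eq c q) (divn_eq c' q).
have h0 := hj 0%N isT; rewrite expn0 !divn1 in h0; rewrite h0; congr (_ * _ + _)%N.
apply: IH.
- by rewrite ltn_divLR // -expnSr.
- by rewrite ltn_divLR // -expnSr.
move=> j hjd; have := hj j.+1 hjd; by rewrite expnS !divnMA => ->.
Qed.

Lemma agree_bound s d c c' : (c < (2 ^ s.+1) ^ d.+1)%N -> (c' < (2 ^ s.+1) ^ d.+1)%N ->
  c != c' -> (#|[pred x : Fld s | Hc s d c x == Hc s d c' x]| <= d)%N.
Proof.
move=> hc hc' ncc.
set p := polyc s d c - polyc s d c'.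
have pn0 : p != 0.
  apply: contra ncc => /eqP; rewrite /p => /eqP; rewrite subr_eq0 => /eqP hp.
  apply/eqP; apply: (@digits_inj (2 ^ s.+1) d) => // [|j hj]; first by rewrite expn_gt0.
  have := congr1 (fun r : {poly Fld s} => r`_j) hp; rewrite /polyc !coef_poly ltnS hj.
  rewrite /digitF => /eqP; rewrite nth_uniq ?enum_uniq // -?cardE ?card_Fld ?ltn_mod ?expn_gt0 //.
  by move/eqP.
set rs := enum [pred x : Fld s | Hc s d c x == Hc s d c' x].
have := max_poly_roots pn0 (rs := rs).
rewrite enum_uniq cardE -/rs => /(_ _ isT) h.
have : (size rs < size p)%N.
  apply: h; apply/allP => x; rewrite mem_enum inE /Hc => /eqP /val_inj /enum_rank_inj hx.
  by rewrite /root /p hornerD hornerN hx subrr.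
move=> hl; rewrite -ltnS; apply: (leq_trans hl).
by rewrite /p (leq_trans (size_polyD _ _)) // size_polyN geq_max !size_poly.
Qed.

Section Step.
Variable R : realFieldType.

Definition Wl s d c (L : seq (R * nat)) (x : Fld s) : R :=
  \sum_(p <- L | (p.2 != c) && (Hc s d p.2 x == Hc s d c x)) p.1.

Definition argx s d c (L : seq (R * nat)) : Fld s :=
  [arg min_(y < (0 : Fld s)) Wl s d c L y]%O.

Definition stepc s d c (L : seq (R * nat)) : nat :=
  (enum_rank (argx s d c L) * 2 ^ s.+1 + Hc s d c (argx s d c L))%N.

Lemma stepc_lt s d c L : (stepc s d c L < (2 ^ s.+1) ^ 2)%N.
Proof.
rewrite /stepc; set q := (2 ^ s.+1)%N.
have h1 := Hc_lt s d c (argx s d c L).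
have h2 : (enum_rank (argx s d c L) < q)%N by rewrite /q -card_Fld ltn_ord.
rewrite expnS expn1.
apply: (@leq_trans ((enum_rank (argx s d c L)).+1 * q)).
  by rewrite mulSn addnC ltn_add2r.
by rewrite leq_mul2r h2 orbT.
Qed.

Lemma stepc_inj s d c L c' L' : stepc s d c L = stepc s d c' L' ->
  argx s d c L = argx s d c' L' /\
  Hc s d c (argx s d c L) = Hc s d c' (argx s d c L).
Proof.
rewrite /stepc => h.
have hm := congr1 (fun m => m %% 2 ^ s.+1)%N h.
have hd := congr1 (fun m => m %/ 2 ^ s.+1)%N h.
move: hm hd => /=; rewrite !modnMDl !divnMDl ?expn_gt0 //.
rewrite !modn_small ?Hc_lt // !divn_small ?Hc_lt // !addn0 => hm /val_inj /enum_rank_inj hx.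
by split => //; rewrite hm hx.
Qed.

Variables (n : nat) (e : rel 'I_n) (w : 'I_n -> 'I_n -> R).

Definition nbrs (col : 'I_n -> nat) (v : 'I_n) : seq (R * nat) :=
  [seq (w v u, col u) | u <- enum 'I_n & e v u].

Lemma Wl_eq s d col v x :
  Wl s d (col v) (nbrs col v) x =
  \sum_u (if e v u && ((col u != col v) && (Hc s d (col u) x == Hc s d (col v) x))
          then w v u else 0).
Proof.
by rewrite /Wl /nbrs big_map big_filter_cond enumT big_mkcond.
Qed.

Hypothesis wpos : forall u v, e u v -> 0 < w u v.

Lemma step_defect s d (col : 'I_n -> nat) :
  (forall u, col u < (2 ^ s.+1) ^ d.+1)%N ->
  forall v, exists W : R,
    defect_w e w (fun u => stepc s d (col u) (nbrs col u)) v <= defect_w e w col v + W /\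
    (2 ^ s.+1)%:R * W <= d%:R * wdeg e w v.
Proof.
move=> hcol v; set xv := argx s d (col v) (nbrs col v).
exists (Wl s d (col v) (nbrs col v) xv); split.
  rewrite /defect_w Wl_eq big_mkcond [X in _ <= X + _]big_mkcond -big_split /=.
  apply: ler_sum => u _.
  case: (boolP (e v u)) => evu /=; last by rewrite addr0.
  have w0 := wpos _ _ evu.
  case: eqP => [/stepc_inj [hx hH]|_]; last by
    apply: addr_ge0; case: ifP => // _; apply: ltW.
  rewrite hx -/xv in hH; rewrite hH eqxx andbT.
  by case: eqP => _; rewrite ?addr0 ?add0r.
have hmin : forall y, Wl s d (col v) (nbrs col v) xv <= Wl s d (col v) (nbrs col v) y.
  rewrite /xv /argx => y; case: arg_minP => // i _ hi; exact: hi.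
apply: (@le_trans _ _ (\sum_(y : Fld s) Wl s d (col v) (nbrs col v) y)).
  have hc : \sum_(y : Fld s) Wl s d (col v) (nbrs col v) xv =
     (2 ^ s.+1)%:R * Wl s d (col v) (nbrs col v) xv.
    by rewrite sumr_const card_Fld mulr_natl.
  have H1 : \sum_(y : Fld s) Wl s d (col v) (nbrs col v) xv <= \sum_(y : Fld s) Wl s d (col v) (nbrs col v) y.
    by apply: ler_sum => y _; exact: hmin.
  by rewrite hc in H1.
under eq_bigr => y _ do rewrite Wl_eq.
rewrite /wdeg mulr_sumr [X in _ <= X]big_mkcond exchange_big.
apply: ler_sum => u _.
case: (boolP (e v u)) => evu /=; last by rewrite big1 // mulr0.
have w0 := ltW (wpos _ _ evu).
case: (eqVneq (col u) (col v)) => hcu /=.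
  by rewrite big1 // mulr_ge0.
rewrite -big_mkcond sumr_const -[w v u *+ _]mulr_natl; apply: ler_wpM2r => //.
rewrite ler_nat; apply: agree_bound => //.
Qed.
End Step.
Arguments Wl {R}.
Arguments argx {R}.
Arguments stepc {R}.
Arguments nbrs {R n}.
Arguments step_defect {R n e w}.

Section Real.
Variable R : realFieldType.

Definition ip (k : nat) : R := ((2 ^ k)%:R)^-1.

Lemma ip_gt0 k : 0 < ip k.
Proof. by rewrite /ip invr_gt0 ltr0n expn_gt0. Qed.

Lemma ip_double k : ip k.+1 + ip k.+1 = ip k.
Proof.
rewrite /ip expnS natrM.
have h : (2 ^ k)%:R != 0 :> R by rewrite pnatr_eq0 expn_eq0.
by field.
Qed.

Lemma ip_le k m : (k <= m)%N -> ip m <= ip k.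
Proof.
move=> hkm; rewrite /ip lef_pV2 ?posrE ?ltr0n ?expn_gt0 //.
have : (2 ^ k <= 2 ^ m)%N by apply: leq_pexp2l.
rewrite -(ler_nat R); exact.
Qed.

Lemma W_bound (W X : R) (q d k : nat) : (0 < q)%N -> (d * 2 ^ k <= q)%N -> 0 <= X ->
  q%:R * W <= d%:R * X -> W <= ip k * X.
Proof.
move=> hq hdk hX hW.
have hq' : 0 < q%:R :> R by rewrite ltr0n.
rewrite -(ler_pM2l hq'); apply: (le_trans hW); rewrite mulrA.
apply: ler_wpM2r => //; rewrite /ip ler_pdivlMr ?ltr0n ?expn_gt0 //.
by rewrite -natrM ler_nat.
Qed.
End Real.

Section Sched.
Variables (R : realFieldType) (n : nat) (e : rel 'I_n) (w : 'I_n -> 'I_n -> R).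
Hypothesis wpos : forall u v, e u v -> 0 < w u v.

Definition stepcol (p : nat * nat * nat) (col : 'I_n -> nat) : 'I_n -> nat :=
  fun v => let '(s, d, b) := p in
    stepc s d (col v) [seq (w v u, dec (enc b (col u))) | u <- enum 'I_n & e v u].

Lemma stepcol_eq s d b col : (forall u, col u < 2 ^ b)%N ->
  forall v, stepcol (s, d, b) col v = stepc s d (col v) (nbrs e w col v).
Proof.
move=> hb v; rewrite /stepcol /nbrs; congr stepc.
by apply: eq_map => u; rewrite dec_enc.
Qed.

Lemma defect_ext (c1 c2 : 'I_n -> nat) v : (forall u, c1 u = c2 u) ->
  defect_w e w c1 v = defect_w e w c2 v.
Proof. by move=> h; rewrite /defect_w; apply: eq_bigl => u; rewrite !h. Qed.

Lemma wdeg_ge0 v : 0 <= wdeg e w v.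
Proof. by apply: sumr_ge0 => u /wpos /ltW. Qed.

Definition runs (ps : seq (nat * nat * nat)) (col : 'I_n -> nat) :=
  foldl (fun c p => stepcol p c) col ps.

Lemma sched_ok l f b col (D : R) : (0 < b)%N -> (b <= f)%N ->
  (forall u, col u < 2 ^ b)%N ->
  (forall v, defect_w e w col v <= D * wdeg e w v) ->
  D <= ip R (l + 3 + tl b) ->
  (forall v, defect_w e w (runs (sched l f b) col) v <= ip R (l + 2) * wdeg e w v) /\
  (forall v, runs (sched l f b) col v < (2 ^ (l + 15).+1) ^ 2)%N.
Proof.
elim: f b col D => [|f IH] b col D hb0 hbf hcol hdef hD; first by lia.
rewrite /=; case: ifP => hl /=.
  set s := s1 l b.
  have hs : (s.+1 = l + 4 + 2 * tl b)%N by rewrite /s /s1; lia.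
  have hcol2 : forall u, (col u < (2 ^ s.+1) ^ (b.-1).+1)%N.
    move=> u; apply: (leq_trans (hcol u)); rewrite -expnM; apply: leq_pexp2l => //.
    rewrite prednK //; lia.
  apply: (IH (2 * s.+1)%N _ (D + ip R (l + 3 + tl b))).
  - by rewrite muln_gt0.
  - have := phase_half _ _ hl; rewrite -/s; lia.
  - move=> u; rewrite (stepcol_eq _ _ _ _ hcol).
    by rewrite mulnC expnM stepc_lt.
  - move=> v; have [W [h1 h2]] := step_defect wpos s b.-1 col hcol2 v.
    rewrite (defect_ext _ _ _ (stepcol_eq _ _ _ _ hcol)).
    have h3 := @W_bound R W (wdeg e w v) (2 ^ s.+1) b.-1 (l + 3 + tl b) (expn_gt0 2 s.+1) _ (wdeg_ge0 v) h2.
    have hnat : (b.-1 * 2 ^ (l + 3 + tl b) <= 2 ^ s.+1)%N.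
      have hb1 : (b.-1 <= 2 ^ (tl b).+1)%N by have := tl_lt b; lia.
      apply: (leq_trans (leq_mul hb1 (leqnn _))); rewrite -expnD hs.
      apply: leq_pexp2l => //; lia.
    apply: (le_trans h1); rewrite mulrDl; apply: lerD; first exact: hdef.
    exact: h3.
  - have ht := phase_tl _ _ hl; rewrite -/s in ht.
    apply: (@le_trans _ _ (ip R (l + 3 + tl b) + ip R (l + 3 + tl b))).
      by apply: lerD.
    have -> : (l + 3 + tl b = (l + 2 + tl b).+1)%N by lia.
    rewrite ip_double; apply: ip_le; lia.
have hcol2 : forall u, (col u < (2 ^ (l + 15).+1) ^ 7.+1)%N.
  move=> u; apply: (leq_trans (hcol u)); rewrite -expnM; apply: leq_pexp2l => //.
  lia.
split; last first.
  by move=> v; rewrite stepc_lt.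
move=> v; have [W [h1 h2]] := step_defect wpos (l + 15)%N 7 col hcol2 v.
rewrite (defect_ext _ _ _ (stepcol_eq _ _ _ _ hcol)).
have h3 := @W_bound R W (wdeg e w v) (2 ^ (l + 15).+1) 7 (l + 3) (expn_gt0 2 _) _ (wdeg_ge0 v) h2.
have hnat : (7 * 2 ^ (l + 3) <= 2 ^ (l + 15).+1)%N.
  rewrite (_ : ((l + 15).+1 = 13 + (l + 3))%N); last by lia.
  rewrite [X in (_ <= X)%N]expnD; apply: leq_mul => //; exact: (@leq_pexp2l 2 3 13).
have e3 : ip R (l + 3) + ip R (l + 3) = ip R (l + 2).
  by rewrite (_ : (l + 3 = (l + 2).+1)%N) ?ip_double //; lia.
apply: (le_trans h1); rewrite -e3 mulrDl; apply: lerD; last exact: h3 hnat.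
apply: (le_trans (hdef v)); apply: ler_wpM2r; first exact: wdeg_ge0.
apply: (le_trans hD); apply: ip_le; lia.
Qed.
End Sched.

Arguments stepcol {R n}.
Arguments runs {R n}.
Arguments sched_ok {R n e w}.
Arguments wdeg_ge0 {R n e w}.

Record nst (R : realFieldType) := NSt
  { sn : nat; seps : R; sinp : seq (nat * R); stt : nat; scol : nat }.
Arguments NSt {R}.
Arguments sn {R}. Arguments seps {R}. Arguments sinp {R}. Arguments stt {R}. Arguments scol {R}.

Definition ell (R : realFieldType) (n : nat) (eps : R) : nat :=
  find (fun k => 1 <= (2 ^ k)%:R * eps) (iota 0 n.+1).
Definition params (R : realFieldType) (n : nat) (eps : R) : seq (nat * nat * nat) :=
  if n%:R * eps ^+ 2 <= 1 then [::] else sched (ell R n eps) (b0 n) (b0 n).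

Definition nsend (R : realFieldType) (st : nst R) (_ : nat) : bitseq :=
  let ps := params R (sn st) (seps st) in
  if (stt st < size ps)%N then enc (nth (0, 0, 0)%N ps (stt st)).2 (scol st) else [::].
Definition nrecv (R : realFieldType) (st : nst R) (msgs : seq (nat * bitseq)) : nst R :=
  let ps := params R (sn st) (seps st) in
  NSt (sn st) (seps st) (sinp st) (stt st).+1
   (if (stt st < size ps)%N then
      let '(s, d, b) := nth (0, 0, 0)%N ps (stt st) in
      stepc s d (scol st) [seq (p.1.2, dec p.2.2) | p <- zip (sinp st) msgs]
    else scol st).
Definition ninit (R : realFieldType) (n : nat) (eps : R) (id : nat) (inp : seq (nat * R)) : nst R :=
  NSt n eps inp 0%N id.-1.
Definition alg (R : realFieldType) : algorithm R :=
  Algorithm (@ninit R) (@nsend R) (@nrecv R) (@scol R).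

Section Sim.
Variables (R : realFieldType) (n : nat) (e : rel 'I_n) (w : 'I_n -> 'I_n -> R) (eps : R).

Lemma state_eq t v : state (alg R) e w eps t v =
  NSt n eps (local_input e w v) t (runs e w (take t (params R n eps)) (fun u => val u) v).
Proof.
elim: t v => [|t IH] v; first by rewrite take0.
set ps := params R n eps.
set s := [seq u <- enum 'I_n | e v u].
change (state (alg R) e w eps t.+1 v) with (nrecv R (state (alg R) e w eps t v)
  [seq (ident u, nsend R (state (alg R) e w eps t u) (ident v)) | u <- s]).
have hm : [seq (ident u, nsend R (state (alg R) e w eps t u) (ident v)) | u <- s] =
  [seq (ident u, nsend R (NSt n eps (local_input e w u) t (runs e w (take t ps) (fun u => val u) u)) (ident v)) | u <- s].
  by apply: eq_map => u; rewrite IH.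
rewrite hm IH /nrecv; cbn [sn seps sinp stt scol]; rewrite -/ps; apply: (f_equal (NSt n eps (local_input e w v) t.+1)).
case: ifP => hts; last first.
  have hle : (size ps <= t)%N by rewrite leqNgt hts.
  rewrite (take_oversize hle) (take_oversize (leq_trans hle (leqnSn t))).
  reflexivity.
rewrite (take_nth (0, 0, 0)%N hts) /runs foldl_rcons -/(runs e w (take t ps) _).
rewrite /nsend; cbn [sn seps sinp stt scol]; rewrite -/ps hts.
case: (nth (0, 0, 0)%N ps t) => [[s1 d] b].
by rewrite /local_input zip_map -map_comp.
Qed.
End Sim.

Section Facts.
Variables (R : realFieldType) (n : nat) (eps : R).
Hypotheses (e0 : 0 < eps) (e1 : eps < 1) (hbig : ~~ (n%:R * eps ^+ 2 <= 1)).

Lemma ell_props : [/\ (0 < ell R n eps)%N, 1 <= (2 ^ ell R n eps)%:R * eps &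
  (2 ^ (ell R n eps).-1)%:R * eps < 1].
Proof.
set a := (fun k : nat => 1 <= (2 ^ k)%:R * eps).
have hne : 1 < n%:R * eps ^+ 2 by rewrite ltNge.
have hn : 1 <= (2 ^ n)%:R * eps.
  have h1 : n%:R * eps ^+ 2 <= n%:R * eps.
    rewrite expr2 mulrA ler_pM2r //; rewrite -[X in _ <= X]mulr1 ler_wpM2l //.
    exact: ltW.
  have h2 : n%:R * eps <= (2 ^ n)%:R * eps.
    by rewrite ler_pM2r // ler_nat ltnW // ltn_expl.
  lra.
have hhas : has a (iota 0 n.+1).
  apply/hasP; exists n; last exact: hn.
  by rewrite mem_iota add0n leq0n ltnSn.
have hlt : (ell R n eps < n.+1)%N by have := hhas; rewrite has_find size_iota.
have hA := nth_find 0%N hhas; rewrite nth_iota // add0n in hA.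
have hA' : 1 <= (2 ^ ell R n eps)%:R * eps := hA.
have hpos : (0 < ell R n eps)%N.
  rewrite lt0n; apply/negP => /eqP h0; by move: hA'; rewrite h0 expn0 mulr1n mul1r leNgt e1.
split => //.
have hlt1 : ((ell R n eps).-1 < ell R n eps)%N by rewrite ltn_predL.
have hB := before_find 0%N hlt1.
rewrite nth_iota ?add0n in hB; last by lia.
by move: hB; rewrite /a => /negbT; rewrite -ltNge.
Qed.
End Facts.

Lemma defect_id (R : realFieldType) (n : nat) (e : rel 'I_n) (w : 'I_n -> 'I_n -> R)
  (eirr : forall v, ~~ e v v) v : defect_w e w (fun u => val u) v = 0.
Proof.
rewrite /defect_w big_pred0 // => u /=.
case: (eqVneq u v) => [->|huv]; first by rewrite (negbTE (eirr v)).
by rewrite (inj_eq val_inj) (negbTE huv) andbF.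
Qed.

Theorem mainTheorem2 (R : realFieldType) :
  exists (Cr Cc Cb : nat) (A : algorithm R),
    forall (n : nat) (e : rel 'I_n) (w : 'I_n -> 'I_n -> R) (eps : R),
      simple_graph e -> pos_weights e w -> 0 < eps < 1 ->
      let T := (Cr * (logstar n).+1)%N in
      bandwidth_ok A e w eps T (Cb * (trunc_log 2 n).+1) /\
      weighted_defective_coloring e w eps (run_output A e w eps T) /\
      (forall v, (run_output A e w eps T v)%:R < Cc%:R / eps ^+ 2).
Proof.
exists 4%N, (4 ^ 17)%N, 1%N, (alg R).
move=> n e w eps [esym eirr] [wsym wpos] /andP [e0 e1] T.
set ps := params R n eps.
have hsz : (size ps <= T)%N.
  rewrite /ps /params; case: ifP => _ //.
  have hb : (b0 n <= 8 * u n 1 + 48)%N by rewrite /b0 /u /=; lia.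
  have := sched_size n (ell R n eps) (b0 n) (b0 n) 0 (or_introl hb).
  rewrite /T subn0; lia.
have hrun : forall v, run_output (alg R) e w eps T v = runs e w ps (fun u => val u) v.
  move=> v; rewrite /run_output state_eq take_oversize //.
have hcol0 : forall u : 'I_n, (val u < 2 ^ b0 n)%N.
  by move=> u; apply: (leq_trans (ltn_ord u)); apply: ltnW; apply: tl_lt.
have hdef0 : forall v, defect_w e w (fun u => val u) v <= 0 * wdeg e w v.
  by move=> v; rewrite defect_id // mul0r.
split.
  move=> t u v ht euv; rewrite state_eq; cbn [send alg nsend sn seps stt scol]; rewrite -/ps.
  rewrite /nsend; cbn [sn seps stt scol]; rewrite -/ps.
  case: ifP => hts; last by [].
  rewrite size_enc mul1n.
  move: hts; rewrite /ps /params; case: ifP => _ // hts.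
  exact: (allP (sched_bits (ell R n eps) (b0 n) (b0 n)) _ (mem_nth (0, 0, 0)%N hts)).
split.
  move=> v; rewrite (defect_ext R n e w _ _ v hrun).
  case: (boolP (n%:R * eps ^+ 2 <= 1)) => hsm.
    have -> : ps = [::] by rewrite /ps /params hsm.
    rewrite /= defect_id //; exact: mulr_ge0 (ltW e0) (wdeg_ge0 wpos v).
  have [hl0 hl1 hl2] := ell_props R n eps e0 e1 hsm.
  have -> : ps = sched (ell R n eps) (b0 n) (b0 n) by rewrite /ps /params (negbTE hsm).
  have [h1 _] := sched_ok wpos (ell R n eps) (b0 n) (b0 n) (fun u => val u) 0
    (ltn0Sn _) (leqnn _) hcol0 hdef0 (ltW (ip_gt0 _ _)).
  apply: le_trans (h1 v) _; apply: ler_wpM2r; first exact: (wdeg_ge0 wpos v).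
  apply: le_trans (ip_le R _ _ (leq_addr 2 _)) _.
  rewrite -[ip R _]mulr1; apply: le_trans (ler_wpM2l (ltW (ip_gt0 _ _)) hl1) _.
  by rewrite mulrA /ip mulVf ?mul1r // pnatr_eq0 expn_eq0.
move=> v; rewrite hrun ltr_pdivlMr ?exprn_gt0 //.
case: (boolP (n%:R * eps ^+ 2 <= 1)) => hsm.
  have -> : ps = [::] by rewrite /ps /params hsm.
  rewrite /=; apply: (@lt_le_trans _ _ (n%:R * eps ^+ 2)).
    by rewrite ltr_pM2r ?exprn_gt0 // ltr_nat ltn_ord.
  apply: (le_trans hsm); by rewrite ler1n expn_gt0.
have [hl0 hl1 hl2] := ell_props R n eps e0 e1 hsm.
have -> : ps = sched (ell R n eps) (b0 n) (b0 n) by rewrite /ps /params (negbTE hsm).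
have [_ h2] := sched_ok wpos (ell R n eps) (b0 n) (b0 n) (fun u => val u) 0
  (ltn0Sn _) (leqnn _) hcol0 hdef0 (ltW (ip_gt0 _ _)).
set l := ell R n eps in hl0 hl1 hl2 h2 *.
set c := runs _ _ _ _ v in h2 *.
have hX : ((2 ^ (l + 15).+1) ^ 2 = (2 ^ 17 * 2 ^ l.-1) ^ 2)%N.
  by rewrite -expnD (_ : ((l + 15).+1 = 17 + l.-1)%N) //; lia.
rewrite hX in h2.
have hc : (c%:R : R) * eps ^+ 2 < ((2 ^ 17 * 2 ^ l.-1) ^ 2)%:R * eps ^+ 2.
  rewrite ltr_pM2r ?exprn_gt0 // ltr_nat; exact: h2.
apply: (lt_le_trans hc).
rewrite natrX natrM exprMn -mulrA -exprMn.
have hy0 : 0 <= (2 ^ l.-1)%:R * eps by apply: mulr_ge0 => //; exact: ltW.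
have hy := exprn_ile1 2 hy0 (ltW hl2).
apply: (@le_trans _ _ (((2 ^ 17)%:R : R) ^+ 2)).
  rewrite -[X in _ <= X]mulr1; apply: ler_wpM2l => //; exact: exprn_ge0.
rewrite [X in _ <= X]natrX natrX -exprM mulnC exprM expr2 -natrM.
by [].
Qed.
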